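(* Let $F$ and $G$ be groups. The map $\mathfrak{F}\colon O(F)\times O(G)\to O(F*G)$ sending $(<_F,<_G)$ to the ordering $\prec$ of $F*G$ described in the context is continuous and injective.
   Context: For a group $H$, $O(H)$ is the set of all orderings of $H$ (strict total orders invariant under left and right multiplication), with topology whose basic open sets are, for finite $S\subset H$, the sets of orderings in which all elements of $S$ exceed the identity. Construction of $\prec=\mathfrak{F}(<_F,<_G)$: order $F\times G$ lexicographically ($(f,g)<(f',g')$ iff $f<_Ff'$, or $f=f'$ and $g<_Gg'$); in $R=\mathbb{Z}(F\times G)$ call a nonzero element positive if the coefficient of its largest group element is a positive integer. Let $\rho\colon F*G\to M_2(R[t])$ be the injective homomorphism with $\rho(f)=\begin{pmatrix} f&(f-1)t\\0&1\end{pmatrix}$ ($f\in F$), $\rho(g)=\begin{pmatrix}1&0\\(g-1)t&g\end{pmatrix}$ ($g\in G$). Order the matrix positions $(1,1)$, $(2,2)$, then the off-diagonal positions in a fixed order. A nonzero $M=\sum_iM_it^i$ ($M_i\in M_2(R)$) is positive if for the least $n$ with $M_n\ne0$ the first nonzero entry of $M_n$ is positive in $R$. Set $x\prec y$ iff $\rho(y)-\rho(x)$ is positive. *)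

(* Defs.v *)
From Stdlib Require List.
From mathcomp Require Import all_boot all_algebra.

Set Implicit Arguments.
Unset Strict Implicit.
Unset Printing Implicit Defensive.

Import GRing.Theory Num.Theory.

Section Orderings.
Variables (T : Type) (mulT : T -> T -> T) (oneT : T).

Definition is_ordering (lt : T -> T -> Prop) : Prop :=
  [/\ (forall x, ~ lt x x),
      (forall x y z, lt x y -> lt y z -> lt x z),
      (forall x y, x <> y -> lt x y \/ lt y x),
      (forall x y z, lt x y -> lt (mulT z x) (mulT z y)) &
      (forall x y z, lt x y -> lt (mulT x z) (mulT y z))].

Definition ordering := {lt : T -> T -> Prop | is_ordering lt}.

Definition basic_open (S : seq T) : ordering -> Prop :=
  fun o => forall s, List.In s S -> proj1_sig o oneT s.

Definition ord_open (U : ordering -> Prop) : Prop :=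
  forall o, U o -> exists S : seq T,
    basic_open S o /\ (forall o', basic_open S o' -> U o').

End Orderings.

Definition prod_ord_open (T1 T2 : Type) (m1 : T1 -> T1 -> T1) (e1 : T1)
  (m2 : T2 -> T2 -> T2) (e2 : T2)
  (W : ordering m1 * ordering m2 -> Prop) : Prop :=
  forall p, W p -> exists (S1 : seq T1) (S2 : seq T2),
    basic_open e1 S1 p.1 /\ basic_open e2 S2 p.2 /\
    (forall q, basic_open e1 S1 q.1 -> basic_open e2 S2 q.2 -> W q).

Definition ord_continuous (T1 T2 T : Type) (m1 : T1 -> T1 -> T1) (e1 : T1)
  (m2 : T2 -> T2 -> T2) (e2 : T2) (m : T -> T -> T) (e : T)
  (phi : ordering m1 * ordering m2 -> ordering m) : Prop :=
  forall U : ordering m -> Prop, ord_open e U ->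
    prod_ord_open e1 e2 (fun p => U (phi p)).

Section FreeProduct.
Variables F G : groupType.

Definition letter := (F + G)%type.

Definition nontriv (a : letter) : bool :=
  match a with inl f => f != 1%g | inr g => g != 1%g end.

Definition side (a : letter) : bool := if a is inl _ then true else false.

Definition reduced (w : seq letter) : bool :=
  all nontriv w && sorted (fun a b => side a != side b) w.

Definition push (a : letter) (w : seq letter) : seq letter :=
  match a with
  | inl f =>
      if f == 1%g then w else
      match w with
      | inl f' :: w' => if (f * f')%g == 1%g then w' else inl (f * f')%g :: w'
      | _ => inl f :: w
      end
  | inr g =>
      if g == 1%g then w else
      match w with
      | inr g' :: w' => if (g * g')%g == 1%g then w' else inr (g * g')%g :: w'
      | _ => inr g :: w
      end
  end.

Lemma reduced_cons a w :
  reduced (a :: w) = nontriv a && reduced w &&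
    (if w is b :: _ then side a != side b else true).
Proof.
rewrite /reduced /=; case: w => [|b w] /=; first by rewrite !andbT.
by rewrite -!andbA; do !bool_congr.
Qed.

Lemma push_reduced a w : reduced w -> reduced (push a w).
Proof.
case: a => [f|g] /=.
- case: eqP => // /eqP nf.
  case: w => [|[f'|g'] w'] Hw; rewrite ?reduced_cons /= ?nf //.
  + move: Hw; rewrite reduced_cons => /andP[/andP[_ Hw'] Hs].
    case: eqP => [_|/eqP nff]; first by [].
    by rewrite reduced_cons /= nff Hw' /=; case: w' Hs Hw' => [|[]].
  + by move: Hw; rewrite reduced_cons /= => ->.
- case: eqP => // /eqP ng.
  case: w => [|[f'|g'] w'] Hw; rewrite ?reduced_cons /= ?ng //.
  + by move: Hw; rewrite reduced_cons /= => ->.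
  + move: Hw; rewrite reduced_cons => /andP[/andP[_ Hw'] Hs].
    case: eqP => [_|/eqP ngg]; first by [].
    by rewrite reduced_cons /= ngg Hw' /=; case: w' Hs Hw' => [|[]].
Qed.

Lemma foldr_push_reduced (u v : seq letter) :
  reduced v -> reduced (foldr push v u).
Proof. by elim: u => //= a u IH Hv; apply: push_reduced; apply: IH. Qed.

Definition freeprod := {w : seq letter | reduced w}.

Definition fp_one : freeprod := exist _ [::] isT.

Definition fp_mul (u v : freeprod) : freeprod :=
  exist _ (foldr push (proj1_sig v) (proj1_sig u))
    (foldr_push_reduced (proj1_sig u) (proj2_sig v)).

(* An element of R[t] is represented by a finite formal sum of terms        *)
(* c * (f,g) * t^n, given as a list of (c, (f,g), n).                       *)

Local Open Scope ring_scope.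

Definition term := (int * (F * G) * nat)%type.
Definition pol := seq term.

Definition pmulFG (p q : F * G) : F * G := ((p.1 * q.1)%g, (p.2 * q.2)%g).

Definition padd (p q : pol) : pol := p ++ q.
Definition pneg (p : pol) : pol := [seq (- x.1.1, x.1.2, x.2) | x <- p].
Definition pmul (p q : pol) : pol :=
  [seq (x.1.1 * y.1.1, pmulFG x.1.2 y.1.2, (x.2 + y.2)%N) | x <- p, y <- q].

Definition pcoef (p : pol) (n : nat) (h : F * G) : int :=
  \sum_(x <- p | (x.1.2 == h) && (x.2 == n)) x.1.1.

Record mat := Mat { m11 : pol; m12 : pol; m21 : pol; m22 : pol }.

Definition mmul (A B : mat) : mat :=
  Mat (padd (pmul (m11 A) (m11 B)) (pmul (m12 A) (m21 B)))
      (padd (pmul (m11 A) (m12 B)) (pmul (m12 A) (m22 B)))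
      (padd (pmul (m21 A) (m11 B)) (pmul (m22 A) (m21 B)))
      (padd (pmul (m21 A) (m12 B)) (pmul (m22 A) (m22 B))).

Definition msub (A B : mat) : mat :=
  Mat (padd (m11 A) (pneg (m11 B))) (padd (m12 A) (pneg (m12 B)))
      (padd (m21 A) (pneg (m21 B))) (padd (m22 A) (pneg (m22 B))).

Definition e1 : F * G := (1%g, 1%g).

Definition mid : mat := Mat [:: (1, e1, 0%N)] [::] [::] [:: (1, e1, 0%N)].

(* rho(f) = [[f, (f-1)t], [0, 1]],  rho(g) = [[1, 0], [(g-1)t, g]] *)
Definition rho_letter (a : letter) : mat :=
  match a with
  | inl f => Mat [:: (1, (f, 1%g), 0%N)]
                 [:: (1, (f, 1%g), 1%N); (-1, e1, 1%N)]
                 [::] [:: (1, e1, 0%N)]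
  | inr g => Mat [:: (1, e1, 0%N)] [::]
                 [:: (1, (1%g, g), 1%N); (-1, e1, 1%N)]
                 [:: (1, (1%g, g), 0%N)]
  end.

Definition rho (x : freeprod) : mat := foldr (fun a M => mmul (rho_letter a) M) mid (proj1_sig x).

Variables (ltF : F -> F -> Prop) (ltG : G -> G -> Prop).

Definition lexlt (p q : F * G) : Prop :=
  ltF p.1 q.1 \/ (p.1 = q.1 /\ ltG p.2 q.2).

Definition posR (r : F * G -> int) : Prop :=
  exists h, 0 < r h /\ (forall h', lexlt h h' -> r h' = 0).

Definition entries (offd : bool) (M : mat) : seq pol :=
  if offd then [:: m11 M; m22 M; m21 M; m12 M]
  else [:: m11 M; m22 M; m12 M; m21 M].

(* M = sum_i M_i t^i is positive: for the least n with M_n <> 0, the first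
   nonzero entry of M_n is positive in R *)
Definition mpos (offd : bool) (M : mat) : Prop :=
  exists (n k : nat),
    [/\ (k < 4)%N,
        (forall m e h, (m < n)%N -> List.In e (entries offd M) -> pcoef e m h = 0),
        (forall j h, (j < k)%N -> pcoef (nth [::] (entries offd M) j) n h = 0) &
        posR (pcoef (nth [::] (entries offd M) k) n)].

Definition frak (offd : bool) (x y : freeprod) : Prop :=
  mpos offd (msub (rho y) (rho x)).

End FreeProduct.

(* Main.v *)
Require Import Defs.
From mathcomp Require Import all_boot all_algebra.
From mathcomp Require Import order ring.
From Stdlib Require Import Classical.
Set Implicit Arguments.
Unset Strict Implicit.
Unset Printing Implicit Defensive.
Import Order.TTheory GRing.Theory Num.Theory.
Local Open Scope ring_scope.

Section Alg.
Variables F G : groupType.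
Local Notation pol := (pol F G).
Local Notation fg := (F * G)%type.

Definition pinv (h : fg) : fg := ((h.1)^-1, (h.2)^-1)%g.

Lemma pmulFGA (a b c : fg) : pmulFG a (pmulFG b c) = pmulFG (pmulFG a b) c.
Proof. by rewrite /pmulFG /= !mulgA. Qed.
Lemma pmulVFG (a h : fg) : pmulFG (pinv a) (pmulFG a h) = h.
Proof. by case: a h => a1 a2 [h1 h2]; rewrite /pmulFG /pinv /= !mulKg. Qed.
Lemma pmulFGV (a h : fg) : pmulFG a (pmulFG (pinv a) h) = h.
Proof. by case: a h => a1 a2 [h1 h2]; rewrite /pmulFG /pinv /= !mulVKg. Qed.
Lemma pmulFGK (a h : fg) : pmulFG (pmulFG h a) (pinv a) = h.
Proof. by case: a h => a1 a2 [h1 h2]; rewrite /pmulFG /pinv /= !mulgK. Qed.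
Lemma pmulFGKV (a h : fg) : pmulFG (pmulFG h (pinv a)) a = h.
Proof. by case: a h => a1 a2 [h1 h2]; rewrite /pmulFG /pinv /= !mulgVK. Qed.
Lemma pmul1FG (h : fg) : pmulFG (e1 F G) h = h.
Proof. by case: h => h1 h2; rewrite /pmulFG /= !mul1g. Qed.
Lemma pmulFG1 (h : fg) : pmulFG h (e1 F G) = h.
Proof. by case: h => h1 h2; rewrite /pmulFG /= !mulg1. Qed.
Lemma pinvM (a b : fg) : pinv (pmulFG a b) = pmulFG (pinv b) (pinv a).
Proof. by rewrite /pinv /pmulFG /= !invgM. Qed.
Lemma pinvK (a : fg) : pinv (pinv a) = a.
Proof. by case: a => a1 a2; rewrite /pinv /= !invgK. Qed.
Lemma pmulVa (a : fg) : pmulFG (pinv a) a = e1 F G.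
Proof. by case: a => a1 a2; rewrite /pmulFG /pinv /= !mulVg. Qed.
Lemma pinv1 : pinv (e1 F G) = e1 F G.
Proof. by rewrite /pinv /= !invg1. Qed.

Lemma pcoef_nil n h : pcoef ([::] : pol) n h = 0.
Proof. by rewrite /pcoef big_nil. Qed.
Lemma pcoef_cons (x : term F G) p n h :
  pcoef (x :: p) n h = (if (x.1.2 == h) && (x.2 == n) then x.1.1 else 0) + pcoef p n h.
Proof. rewrite /pcoef big_cons. case: ifP => _ //=. by rewrite add0r. Qed.
Lemma pcoef_cat (p q : pol) n h : pcoef (p ++ q) n h = pcoef p n h + pcoef q n h.
Proof. by rewrite /pcoef big_cat. Qed.
Lemma pcoef_padd (p q : pol) n h : pcoef (padd p q) n h = pcoef p n h + pcoef q n h.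
Proof. exact: pcoef_cat. Qed.
Lemma pcoef_neg (p : pol) n h : pcoef (pneg p) n h = - pcoef p n h.
Proof.
elim: p => [|x p IH]; first by rewrite /= pcoef_nil oppr0.
have -> : pneg (x :: p) = (- x.1.1, x.1.2, x.2) :: pneg p by [].
by rewrite !pcoef_cons IH /= opprD; case: ifP => _; rewrite ?oppr0.
Qed.

Definition tmul (x y : term F G) : term F G :=
  (x.1.1 * y.1.1, pmulFG x.1.2 y.1.2, (x.2 + y.2)%N).

Lemma pmul_cons x (p q : pol) : pmul (x :: p) q = map (tmul x) q ++ pmul p q.
Proof. by []. Qed.
Lemma pmul_nil (q : pol) : pmul [::] q = [::].
Proof. by []. Qed.

Lemma pcoef_map_tmul x (q : pol) n h :
  pcoef (map (tmul x) q) n h =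
  if (x.2 <= n)%N then x.1.1 * pcoef q (n - x.2) (pmulFG (pinv x.1.2) h) else 0.
Proof.
elim: q => [|y q IH]; first by rewrite /= !pcoef_nil; case: ifP; rewrite ?mulr0.
rewrite /= !pcoef_cons IH /tmul /=.
case: leqP => Hx.
- rewrite mulrDr; congr (_ + _).
  have -> : (pmulFG x.1.2 y.1.2 == h) = (y.1.2 == pmulFG (pinv x.1.2) h).
    apply/eqP/eqP => [<-|->]; by rewrite ?pmulVFG ?pmulFGV.
  have -> : ((x.2 + y.2)%N == n) = (y.2 == n - x.2)%N.
    apply/eqP/eqP => [<-|->]; [by rewrite addKn | by rewrite subnKC].
  by case: ifP; rewrite ?mulr0.
- rewrite addr0; case: ifP => // /andP[_ /eqP E].
  by move: Hx; rewrite -E ltnNge leq_addr.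
Qed.

Lemma pcoef_mul_cons x (p q : pol) n h :
  pcoef (pmul (x :: p) q) n h =
  (if (x.2 <= n)%N then x.1.1 * pcoef q (n - x.2) (pmulFG (pinv x.1.2) h) else 0)
  + pcoef (pmul p q) n h.
Proof. by rewrite pmul_cons pcoef_cat pcoef_map_tmul. Qed.

Lemma pcoef_mul_catr (p q r : pol) n h :
  pcoef (pmul p (q ++ r)) n h = pcoef (pmul p q) n h + pcoef (pmul p r) n h.
Proof.
elim: p => [|x p IH]; first by rewrite !pmul_nil !pcoef_nil addr0.
rewrite !pcoef_mul_cons IH pcoef_cat.
case: ifP => _; last by rewrite !add0r.
by rewrite mulrDr; ring.
Qed.

Lemma pcoef_mul_negr (p q : pol) n h :
  pcoef (pmul p (pneg q)) n h = - pcoef (pmul p q) n h.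
Proof.
elim: p => [|x p IH]; first by rewrite !pmul_nil !pcoef_nil oppr0.
rewrite !pcoef_mul_cons IH pcoef_neg.
case: ifP => _; last by rewrite !add0r.
by ring.
Qed.

Lemma pcoef_mul_nilr (p : pol) n h : pcoef (pmul p [::]) n h = 0.
Proof.
elim: p => [|x p IH]; first by rewrite pmul_nil pcoef_nil.
by rewrite pcoef_mul_cons IH pcoef_nil; case: ifP; rewrite ?mulr0 addr0.
Qed.

Lemma pcoef_mul_congr (p q q' : pol) :
  (forall n h, pcoef q n h = pcoef q' n h) ->
  forall n h, pcoef (pmul p q) n h = pcoef (pmul p q') n h.
Proof.
move=> E n h; elim: p => [|x p IH]; first by rewrite !pmul_nil.
by rewrite !pcoef_mul_cons IH E.
Qed.

Lemma pcoef_mul1r (y : term F G) (p : pol) n h :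
  pcoef (pmul p [:: y]) n h =
  if (y.2 <= n)%N then pcoef p (n - y.2) (pmulFG h (pinv y.1.2)) * y.1.1 else 0.
Proof.
elim: p => [|x p IH]; first by rewrite pmul_nil !pcoef_nil; case: ifP; rewrite ?mul0r.
rewrite pcoef_mul_cons IH /= !pcoef_cons !pcoef_nil !addr0.
case Hy: (y.2 <= n)%N; case Hx: (x.2 <= n)%N => /=.
- rewrite mulrDl; congr (_ + _).
  have -> : (x.1.2 == pmulFG h (pinv y.1.2)) = (y.1.2 == pmulFG (pinv x.1.2) h).
    apply/eqP/eqP => [->|->]; first by rewrite pinvM pinvK pmulFGKV.
    by rewrite pinvM pinvK pmulFGV.
  have -> : (x.2 == n - y.2)%N = (y.2 == n - x.2)%N.
    apply/eqP/eqP => [->|->]; by rewrite subKn.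
  by case: ifP; rewrite ?mulr0 ?mul0r // mulrC.
- rewrite add0r; case: ifP => [/andP[_ /eqP E]|_]; last by rewrite add0r.
  by move: Hx; rewrite E leq_subr.
- rewrite addr0; case: ifP => [/andP[_ /eqP E]|_]; last by rewrite mulr0.
  by move: Hy; rewrite E leq_subr.
- by rewrite addr0.
Qed.

Lemma pmul_consr (p : pol) y q : forall n h,
  pcoef (pmul p (y :: q)) n h = pcoef (pmul p [:: y]) n h + pcoef (pmul p q) n h.
Proof. by move=> n h; rewrite -pcoef_mul_catr. Qed.

Lemma pcoef_mul_congl (p p' q : pol) :
  (forall n h, pcoef p n h = pcoef p' n h) ->
  forall n h, pcoef (pmul p q) n h = pcoef (pmul p' q) n h.
Proof.
move=> E n h; elim: q => [|y q IH]; first by rewrite !pcoef_mul_nilr.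
by rewrite pmul_consr [RHS]pmul_consr IH !pcoef_mul1r E.
Qed.

Lemma pmul_catl (p p' q : pol) : pmul (p ++ p') q = pmul p q ++ pmul p' q.
Proof. by elim: p => [//|x p IH]; rewrite cat_cons !pmul_cons IH catA. Qed.

Lemma pmul_negl (p q : pol) : pmul (pneg p) q = pneg (pmul p q).
Proof.
elim: p => [//|x p IH].
have -> : pneg (x :: p) = (- x.1.1, x.1.2, x.2) :: pneg p by [].
rewrite !pmul_cons IH /pneg map_cat.
congr (_ ++ _); rewrite -map_comp; apply: eq_map => y.
by rewrite /tmul /= mulNr.
Qed.

Lemma pmul_map_tmul x (q r : pol) : pmul (map (tmul x) q) r = map (tmul x) (pmul q r).
Proof.
elim: q => [//|y q IH]; rewrite map_cons !pmul_cons IH map_cat.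
congr (_ ++ _); rewrite -map_comp; apply: eq_map => z.
by rewrite /tmul /= mulrA pmulFGA addnA.
Qed.

Lemma pmulA (p q r : pol) : pmul (pmul p q) r = pmul p (pmul q r).
Proof.
elim: p => [//|x p IH].
by rewrite !pmul_cons pmul_catl IH pmul_map_tmul.
Qed.


Definition peq (p q : pol) := forall n h, pcoef p n h = pcoef q n h.
Definition meq (A B : mat F G) :=
  [/\ peq (m11 A) (m11 B), peq (m12 A) (m12 B), peq (m21 A) (m21 B)
    & peq (m22 A) (m22 B)].

Lemma meq_refl A : meq A A. Proof. by split. Qed.
Lemma meq_sym A B : meq A B -> meq B A.
Proof. by case=> E1 E2 E3 E4; split=> n h. Qed.
Lemma meq_trans A B C : meq A B -> meq B C -> meq A C.
Proof.
by case=> E1 E2 E3 E4 [E1' E2' E3' E4']; split=> n h;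
  rewrite ?E1 ?E2 ?E3 ?E4 ?E1' ?E2' ?E3' ?E4'.
Qed.

Lemma pmul_cong (p p' q q' : pol) : peq p p' -> peq q q' -> peq (pmul p q) (pmul p' q').
Proof.
move=> Ep Eq n h; rewrite (pcoef_mul_congl q Ep).
exact: pcoef_mul_congr.
Qed.

Lemma mmul_congr A A' B B' : meq A A' -> meq B B' -> meq (mmul A B) (mmul A' B').
Proof.
case=> E1 E2 E3 E4 [E1' E2' E3' E4']; split=> n h /=; rewrite !pcoef_padd;
  congr (_ + _); apply: pmul_cong.
all: done.
Qed.

Lemma msub_congr A A' B B' : meq A A' -> meq B B' -> meq (msub A B) (msub A' B').
Proof.
case=> E1 E2 E3 E4 [E1' E2' E3' E4']; split=> n h /=;
  by rewrite !pcoef_padd !pcoef_neg ?E1 ?E2 ?E3 ?E4 ?E1' ?E2' ?E3' ?E4'.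
Qed.

Lemma mmulA A B C : meq (mmul (mmul A B) C) (mmul A (mmul B C)).
Proof.
split=> n h; rewrite /= /padd !pmul_catl !pcoef_cat !pmulA !pcoef_mul_catr; ring.
Qed.

Lemma mmul_subr A B C : meq (mmul A (msub B C)) (msub (mmul A B) (mmul A C)).
Proof.
split=> n h; rewrite /= /padd !pcoef_cat !pcoef_mul_catr !pcoef_mul_negr
  !pcoef_neg !pcoef_cat; ring.
Qed.

Lemma mmul_subl A B C : meq (mmul (msub A B) C) (msub (mmul A C) (mmul B C)).
Proof.
split=> n h; rewrite /= /padd !pmul_catl !pmul_negl !pcoef_cat !pcoef_neg
  !pcoef_cat; ring.
Qed.

Lemma pcoef_mid1 c (p : pol) n h : pcoef (pmul [:: (c, e1 F G, 0%N)] p) n h = c * pcoef p n h.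
Proof.
by rewrite pcoef_mul_cons pmul_nil pcoef_nil addr0 /= subn0 pinv1 pmul1FG.
Qed.

Lemma mid_l M : meq (mmul (mid F G) M) M.
Proof.
split=> n h; rewrite /mmul /mid; cbn [m11 m12 m21 m22];
 by rewrite pcoef_padd ?pcoef_mid1 pmul_nil pcoef_nil ?pcoef_mid1 ?addr0 ?add0r mul1r.
Qed.

Local Notation L := (@rho_letter F G).

Lemma LF_mul (f f' : F) : meq (mmul (L (inl f)) (L (inl f'))) (L (inl (f * f')%g)).
Proof.
split=> n h; rewrite /mmul /rho_letter /pmul /padd /=; rewrite ?pcoef_cons ?pcoef_nil /pmulFG /e1 /= ?mulg1 ?mul1g ?addr0 ?mul1r ?mulr1 ?addn0.
all: rewrite ?add0n //.
by case: (((f, 1%g) == h) && (1%N == n)); rewrite ?addKr ?add0r.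
Qed.

Lemma LF_one : meq (L (inl 1%g)) (mid F G).
Proof.
split=> n h; rewrite /rho_letter /mid /=; rewrite ?pcoef_cons ?pcoef_nil //.
by rewrite /e1; case: (((1%g, 1%g) == h) && (1%N == n)).
Qed.

Lemma LG_mul (g g' : G) : meq (mmul (L (inr g)) (L (inr g'))) (L (inr (g * g')%g)).
Proof.
split=> n h; rewrite /mmul /rho_letter /pmul /padd /=; rewrite ?pcoef_cons ?pcoef_nil /pmulFG /e1 /= ?mulg1 ?mul1g ?addr0 ?mul1r ?mulr1 ?addn0.
all: try by rewrite ?add0n //.
rewrite add0n; case: (((1%g, g) == h) && (1%N == n));
  case: (((1%g, 1%g) == h) && (1%N == n)); by case: (((1%g, (g * g')%g) == h) && (1%N == n)).
Qed.

Lemma LG_one : meq (L (inr 1%g)) (mid F G).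
Proof.
split=> n h; rewrite /rho_letter /mid /=; rewrite ?pcoef_cons ?pcoef_nil //.
by rewrite /e1; case: (((1%g, 1%g) == h) && (1%N == n)).
Qed.


Definition rhow (w : seq (letter F G)) : mat F G :=
  foldr (fun a M => mmul (rho_letter a) M) (mid F G) w.

Lemma rhow_cons a w : rhow (a :: w) = mmul (L a) (rhow w).
Proof. by []. Qed.

Lemma rho_rhow (x : freeprod F G) : rho x = rhow (proj1_sig x).
Proof. by []. Qed.

Lemma mmul_L1 (a : letter F G) M : (a = inl 1%g \/ a = inr 1%g) -> meq (mmul (L a) M) M.
Proof.
move=> Ha; apply: meq_trans (mid_l M); apply: mmul_congr (meq_refl _).
by case: Ha => ->; [exact: LF_one | exact: LG_one].
Qed.

Lemma rhow_push a w : meq (rhow (push a w)) (mmul (L a) (rhow w)).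
Proof.
case: a => [f|g]; rewrite [push _ _]/=.
- case: eqP => [->|nf]; first by apply: meq_sym; apply: mmul_L1; left.
  case: w => [|[f'|g'] w]; try exact: meq_refl.
  rewrite rhow_cons; apply: meq_trans _ (mmulA _ _ _).
  apply: meq_trans _ (mmul_congr (meq_sym (LF_mul f f')) (meq_refl _)).
  case: eqP => [E|_]; last exact: meq_refl.
  by rewrite E; apply: meq_sym; apply: mmul_L1; left.
- case: eqP => [->|ng]; first by apply: meq_sym; apply: mmul_L1; right.
  case: w => [|[f'|g'] w]; try exact: meq_refl.
  rewrite rhow_cons; apply: meq_trans _ (mmulA _ _ _).
  apply: meq_trans _ (mmul_congr (meq_sym (LG_mul g g')) (meq_refl _)).
  case: eqP => [E|_]; last exact: meq_refl.
  by rewrite E; apply: meq_sym; apply: mmul_L1; right.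
Qed.

Lemma rhow_foldr (u v : seq (letter F G)) :
  meq (rhow (foldr (@push F G) v u)) (mmul (rhow u) (rhow v)).
Proof.
elim: u => [|a u IH] /=; first exact: meq_sym (mid_l _).
apply: meq_trans (rhow_push _ _) _.
apply: meq_trans (mmul_congr (meq_refl _) IH) _.
exact: meq_sym (mmulA _ _ _).
Qed.

Lemma rho_mul (x y : freeprod F G) : meq (rho (fp_mul x y)) (mmul (rho x) (rho y)).
Proof. exact: rhow_foldr. Qed.

Lemma pcoef_supp (p : pol) n h : pcoef p n h != 0 -> h \in [seq x.1.2 | x <- p].
Proof.
elim: p => [|x p IH]; first by rewrite pcoef_nil eqxx.
rewrite pcoef_cons /= in_cons; case: ifP => [/andP[/eqP -> _]|_]; first by rewrite eqxx.
by rewrite add0r => /IH ->; rewrite orbT.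
Qed.

Lemma sum_pred1 (U : seq fg) a (Phi : fg -> int) : uniq U -> a \in U ->
  \sum_(g <- U) (if a == g then Phi g else 0) = Phi a.
Proof.
elim: U => [//|u U IH] /= /andP[uU uniqU]; rewrite in_cons big_cons.
have [au|nau] := eqVneq a u.
  move=> _; rewrite au big1_seq ?addr0 // => g /= gU.
  have [ug|//] := eqVneq u g.
  by move: uU; rewrite ug gU.
by rewrite /= add0r => aU; rewrite IH.
Qed.

Lemma regroup (p : pol) (Phi : fg -> int) (U : seq fg) : uniq U ->
  {subset [seq x.1.2 | x <- p] <= U} ->
  \sum_(x <- p | x.2 == 0%N) x.1.1 * Phi x.1.2 = \sum_(g <- U) pcoef p 0 g * Phi g.
Proof.
move=> uU; elim: p => [|x p IH] sub.
  by rewrite big_nil big1_seq // => g _; rewrite pcoef_nil mul0r.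
rewrite big_cons.
have sub' : {subset [seq x.1.2 | x <- p] <= U}.
  by move=> g g_in; apply: sub; rewrite /= in_cons g_in orbT.
have xU : x.1.2 \in U by apply: sub; rewrite /= in_cons eqxx.
rewrite [RHS](eq_bigr (fun g => (if (x.1.2 == g) && (x.2 == 0%N) then x.1.1 else 0) * Phi g
   + pcoef p 0 g * Phi g)); last by move=> g _; rewrite pcoef_cons mulrDl.
rewrite big_split /= -(IH sub').
case: eqP => [x0|xn0].
- congr (_ + _); rewrite -[LHS](sum_pred1 (fun g => x.1.1 * Phi g) uU xU).
  by apply: eq_bigr => g _; rewrite andbT; case: ifP; rewrite ?mul0r.
- by rewrite [in RHS]big1 ?add0r // => g _; rewrite andbF mul0r.
Qed.

Lemma sum_deg0_ind (p : pol) a (Phi : fg -> int) :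
  (forall h, pcoef p 0 h = (h == a)%:Z) ->
  \sum_(x <- p | x.2 == 0%N) x.1.1 * Phi x.1.2 = Phi a.
Proof.
move=> Hp; rewrite (regroup Phi (undup_uniq [seq x.1.2 | x <- p])); last first.
  by move=> g; rewrite mem_undup.
have aU : a \in undup [seq x.1.2 | x <- p].
  by rewrite mem_undup; apply: (@pcoef_supp p 0); rewrite Hp eqxx.
rewrite -[RHS](sum_pred1 Phi (undup_uniq _) aU).
by apply: eq_bigr => g _; rewrite Hp eq_sym; case: eqP; rewrite ?mul1r ?mul0r.
Qed.

Lemma sum_deg0_zero (p : pol) (Phi : fg -> int) :
  (forall h, pcoef p 0 h = 0) ->
  \sum_(x <- p | x.2 == 0%N) x.1.1 * Phi x.1.2 = 0.
Proof.
move=> Hp; rewrite (regroup Phi (undup_uniq [seq x.1.2 | x <- p])); last first.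
  by move=> g; rewrite mem_undup.
by rewrite big1 // => g _; rewrite Hp mul0r.
Qed.

Lemma low_l (p q : pol) n : (forall m h, (m < n)%N -> pcoef q m h = 0) ->
  forall m h, (m <= n)%N ->
  pcoef (pmul p q) m h = \sum_(x <- p | x.2 == 0%N) x.1.1 * pcoef q m (pmulFG (pinv x.1.2) h).
Proof.
move=> Hq m h Hm; elim: p => [|x p IH]; first by rewrite pmul_nil pcoef_nil big_nil.
rewrite pcoef_mul_cons big_cons IH; case: eqP => [->|x0].
  by rewrite leq0n subn0.
case Hx: (x.2 <= m)%N; last by rewrite add0r.
rewrite Hq ?mulr0 ?add0r //.
apply: leq_trans Hm; rewrite -subn_gt0 subKn //; by case: (x.2) x0.
Qed.

Lemma low_r (p q : pol) n : (forall m h, (m < n)%N -> pcoef p m h = 0) ->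
  forall m h, (m <= n)%N ->
  pcoef (pmul p q) m h = \sum_(y <- q | y.2 == 0%N) y.1.1 * pcoef p m (pmulFG h (pinv y.1.2)).
Proof.
move=> Hp m h Hm; elim: q => [|y q IH]; first by rewrite pcoef_mul_nilr big_nil.
rewrite pmul_consr pcoef_mul1r big_cons IH; case: eqP => [->|y0].
  by rewrite leq0n subn0 mulrC.
case Hy: (y.2 <= m)%N; last by rewrite add0r.
rewrite Hp ?mul0r ?add0r //.
apply: leq_trans Hm; rewrite -subn_gt0 subKn //; by case: (y.2) y0.
Qed.

Definition goodab (A : mat F G) (a b : fg) :=
  [/\ forall h, pcoef (m11 A) 0 h = (h == a)%:Z,
      forall h, pcoef (m22 A) 0 h = (h == b)%:Z,
      forall h, pcoef (m12 A) 0 h = 0 &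
      forall h, pcoef (m21 A) 0 h = 0].

Definition mzero_below (M : mat F G) n := forall m h, (m < n)%N ->
  [/\ pcoef (m11 M) m h = 0, pcoef (m12 M) m h = 0, pcoef (m21 M) m h = 0
    & pcoef (m22 M) m h = 0].

Lemma goodab_mul_l A a b M n : goodab A a b -> mzero_below M n ->
  forall m h, (m <= n)%N ->
  [/\ pcoef (m11 (mmul A M)) m h = pcoef (m11 M) m (pmulFG (pinv a) h),
      pcoef (m12 (mmul A M)) m h = pcoef (m12 M) m (pmulFG (pinv a) h),
      pcoef (m21 (mmul A M)) m h = pcoef (m21 M) m (pmulFG (pinv b) h) &
      pcoef (m22 (mmul A M)) m h = pcoef (m22 M) m (pmulFG (pinv b) h)].
Proof.
case=> H11 H22 H12 H21 HM m h Hm.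
have Z1 : forall m h, (m < n)%N -> pcoef (m11 M) m h = 0.
  by move=> m' h' Hm'; case: (HM m' h' Hm').
have Z2 : forall m h, (m < n)%N -> pcoef (m12 M) m h = 0.
  by move=> m' h' Hm'; case: (HM m' h' Hm').
have Z3 : forall m h, (m < n)%N -> pcoef (m21 M) m h = 0.
  by move=> m' h' Hm'; case: (HM m' h' Hm').
have Z4 : forall m h, (m < n)%N -> pcoef (m22 M) m h = 0.
  by move=> m' h' Hm'; case: (HM m' h' Hm').
rewrite /mmul; cbn [m11 m12 m21 m22]; rewrite !pcoef_padd.
split.
- rewrite (low_l _ Z1 h Hm) (low_l _ Z3 h Hm).
  rewrite (sum_deg0_ind (fun g => pcoef (m11 M) m (pmulFG (pinv g) h)) H11).
  by rewrite (sum_deg0_zero (fun g => pcoef (m21 M) m (pmulFG (pinv g) h)) H12) addr0.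
- rewrite (low_l _ Z2 h Hm) (low_l _ Z4 h Hm).
  rewrite (sum_deg0_ind (fun g => pcoef (m12 M) m (pmulFG (pinv g) h)) H11).
  by rewrite (sum_deg0_zero (fun g => pcoef (m22 M) m (pmulFG (pinv g) h)) H12) addr0.
- rewrite (low_l _ Z1 h Hm) (low_l _ Z3 h Hm).
  rewrite (sum_deg0_ind (fun g => pcoef (m21 M) m (pmulFG (pinv g) h)) H22).
  by rewrite (sum_deg0_zero (fun g => pcoef (m11 M) m (pmulFG (pinv g) h)) H21) add0r.
- rewrite (low_l _ Z2 h Hm) (low_l _ Z4 h Hm).
  rewrite (sum_deg0_ind (fun g => pcoef (m22 M) m (pmulFG (pinv g) h)) H22).
  by rewrite (sum_deg0_zero (fun g => pcoef (m12 M) m (pmulFG (pinv g) h)) H21) add0r.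
Qed.

Lemma goodab_mul_r A a b M n : goodab A a b -> mzero_below M n ->
  forall m h, (m <= n)%N ->
  [/\ pcoef (m11 (mmul M A)) m h = pcoef (m11 M) m (pmulFG h (pinv a)),
      pcoef (m12 (mmul M A)) m h = pcoef (m12 M) m (pmulFG h (pinv b)),
      pcoef (m21 (mmul M A)) m h = pcoef (m21 M) m (pmulFG h (pinv a)) &
      pcoef (m22 (mmul M A)) m h = pcoef (m22 M) m (pmulFG h (pinv b))].
Proof.
case=> H11 H22 H12 H21 HM m h Hm.
have Z1 : forall m h, (m < n)%N -> pcoef (m11 M) m h = 0.
  by move=> m' h' Hm'; case: (HM m' h' Hm').
have Z2 : forall m h, (m < n)%N -> pcoef (m12 M) m h = 0.
  by move=> m' h' Hm'; case: (HM m' h' Hm').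
have Z3 : forall m h, (m < n)%N -> pcoef (m21 M) m h = 0.
  by move=> m' h' Hm'; case: (HM m' h' Hm').
have Z4 : forall m h, (m < n)%N -> pcoef (m22 M) m h = 0.
  by move=> m' h' Hm'; case: (HM m' h' Hm').
rewrite /mmul; cbn [m11 m12 m21 m22]; rewrite !pcoef_padd.
split.
- rewrite (low_r _ Z1 h Hm) (low_r _ Z2 h Hm).
  rewrite (sum_deg0_ind (fun g => pcoef (m11 M) m (pmulFG h (pinv g))) H11).
  by rewrite (sum_deg0_zero (fun g => pcoef (m12 M) m (pmulFG h (pinv g))) H21) addr0.
- rewrite (low_r _ Z1 h Hm) (low_r _ Z2 h Hm).
  rewrite (sum_deg0_ind (fun g => pcoef (m12 M) m (pmulFG h (pinv g))) H22).
  by rewrite (sum_deg0_zero (fun g => pcoef (m11 M) m (pmulFG h (pinv g))) H12) add0r.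
- rewrite (low_r _ Z3 h Hm) (low_r _ Z4 h Hm).
  rewrite (sum_deg0_ind (fun g => pcoef (m21 M) m (pmulFG h (pinv g))) H11).
  by rewrite (sum_deg0_zero (fun g => pcoef (m22 M) m (pmulFG h (pinv g))) H21) addr0.
- rewrite (low_r _ Z3 h Hm) (low_r _ Z4 h Hm).
  rewrite (sum_deg0_ind (fun g => pcoef (m22 M) m (pmulFG h (pinv g))) H22).
  by rewrite (sum_deg0_zero (fun g => pcoef (m21 M) m (pmulFG h (pinv g))) H12) add0r.
Qed.

Lemma mzero_below0 M : mzero_below M 0.
Proof. by []. Qed.

Lemma goodab_mul A a b B a' b' : goodab A a b -> goodab B a' b' ->
  goodab (mmul A B) (pmulFG a a') (pmulFG b b').
Proof.
move=> HA [H11 H22 H12 H21].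
have K := goodab_mul_l HA (mzero_below0 B).
have E : forall c c' h, (pmulFG (pinv c) h == c') = (h == pmulFG c c').
  move=> c c' h; apply/eqP/eqP => [<-|->]; by rewrite ?pmulFGV ?pmulVFG.
split=> h; have [E11 E12 E21 E22] := K 0%N h (leqnn 0).
- by rewrite E11 H11 E.
- by rewrite E22 H22 E.
- by rewrite E12 H12.
- by rewrite E21 H21.
Qed.

Lemma goodab_mid : goodab (mid F G) (e1 F G) (e1 F G).
Proof.
by split=> h; rewrite /mid /= ?pcoef_cons ?pcoef_nil /= ?addr0 ?andbT // eq_sym;
  case: eqP.
Qed.

Lemma goodab_LF (f : F) : goodab (L (inl f)) (f, 1%g) (e1 F G).
Proof.
by split=> h; rewrite /rho_letter /= ?pcoef_cons ?pcoef_nil /= ?addr0 ?andbT ?andbF // eq_sym;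
  case: eqP.
Qed.

Lemma goodab_LG (g : G) : goodab (L (inr g)) (e1 F G) (1%g, g).
Proof.
by split=> h; rewrite /rho_letter /= ?pcoef_cons ?pcoef_nil /= ?addr0 ?andbT ?andbF // eq_sym;
  case: eqP.
Qed.

Lemma good_rhow w : exists a b, goodab (rhow w) a b.
Proof.
elim: w => [|x w [a [b IH]]]; first by exists (e1 F G), (e1 F G); exact: goodab_mid.
case: x => [f|g].
- by exists (pmulFG (f, 1%g) a), (pmulFG (e1 F G) b); apply: goodab_mul IH; exact: goodab_LF.
- by exists (pmulFG (e1 F G) a), (pmulFG (1%g, g) b); apply: goodab_mul IH; exact: goodab_LG.
Qed.

Lemma LF_entries (f : F) M m h :
  let c := pmulFG (pinv (f, 1%g)) h in
  [/\ pcoef (m11 (mmul (L (inl f)) M)) m h = pcoef (m11 M) m c +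
        (if (1 <= m)%N then pcoef (m21 M) (m - 1) c - pcoef (m21 M) (m - 1) h else 0),
      pcoef (m12 (mmul (L (inl f)) M)) m h = pcoef (m12 M) m c +
        (if (1 <= m)%N then pcoef (m22 M) (m - 1) c - pcoef (m22 M) (m - 1) h else 0),
      pcoef (m21 (mmul (L (inl f)) M)) m h = pcoef (m21 M) m h &
      pcoef (m22 (mmul (L (inl f)) M)) m h = pcoef (m22 M) m h].
Proof.
rewrite /mmul /rho_letter; cbn [m11 m12 m21 m22].
split; rewrite pcoef_padd ?pcoef_mul_cons ?pmul_nil ?pcoef_nil /= ?subn0 ?pinv1 ?pmul1FG.
all: rewrite ?addr0 ?add0r ?mul1r //.
all: by case: ifP; rewrite ?addr0 // mulN1r.
Qed.

Lemma LG_entries (g : G) M m h :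
  let c := pmulFG (pinv (1%g, g)) h in
  [/\ pcoef (m11 (mmul (L (inr g)) M)) m h = pcoef (m11 M) m h,
      pcoef (m12 (mmul (L (inr g)) M)) m h = pcoef (m12 M) m h,
      pcoef (m21 (mmul (L (inr g)) M)) m h =
        (if (1 <= m)%N then pcoef (m11 M) (m - 1) c - pcoef (m11 M) (m - 1) h else 0)
        + pcoef (m21 M) m c &
      pcoef (m22 (mmul (L (inr g)) M)) m h =
        (if (1 <= m)%N then pcoef (m12 M) (m - 1) c - pcoef (m12 M) (m - 1) h else 0)
        + pcoef (m22 M) m c].
Proof.
rewrite /mmul /rho_letter; cbn [m11 m12 m21 m22].
split; rewrite pcoef_padd ?pcoef_mul_cons ?pmul_nil ?pcoef_nil /= ?subn0 ?pinv1 ?pmul1FG.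
all: rewrite ?addr0 ?add0r ?mul1r //.
all: by case: ifP; rewrite ?addr0 // mulN1r.
Qed.

Section Ord.
Variables (ltF : F -> F -> Prop) (ltG : G -> G -> Prop).
Hypothesis HF : is_ordering (fun x y : F => (x * y)%g) ltF.
Hypothesis HG : is_ordering (fun x y : G => (x * y)%g) ltG.

Local Notation lex := (lexlt ltF ltG).
Local Notation posR := (posR ltF ltG).

Lemma lex_irr h : ~ lex h h.
Proof.
case: HF HG => irrF _ _ _ _ [irrG _ _ _ _].
by case=> [/irrF|[_ /irrG]].
Qed.

Lemma lex_trans h1 h2 h3 : lex h1 h2 -> lex h2 h3 -> lex h1 h3.
Proof.
case: HF HG => _ trF _ _ _ [_ trG _ _ _].
case=> [l12|[e12 l12]] [l23|[e23 l23]].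
- by left; apply: trF l23.
- by left; rewrite -e23.
- by left; rewrite e12.
- by right; split; [rewrite e12 | apply: trG l23].
Qed.

Lemma lex_total h h' : h <> h' -> lex h h' \/ lex h' h.
Proof.
case: HF HG => _ _ toF _ _ [_ _ toG _ _].
case: h h' => [h1 h2] [h1' h2'] ne.
have [e1'|ne1] := eqVneq h1 h1'.
  have ne2 : h2 <> h2' by move=> e2; apply: ne; rewrite e1' e2.
  by case: (toG _ _ ne2) => l; [left|right]; right; split.
by case: (toF _ _ (elimN eqP ne1)) => l; [left|right]; left.
Qed.

Lemma lex_mull c h h' : lex h h' -> lex (pmulFG c h) (pmulFG c h').
Proof.
case: HF HG => _ _ _ lF _ [_ _ _ lG _].
case=> [l|[e l]]; first by left; apply: lF.
by right; split; [rewrite /= e | apply: lG].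
Qed.

Lemma lex_mulr c h h' : lex h h' -> lex (pmulFG h c) (pmulFG h' c).
Proof.
case: HF HG => _ _ _ _ rF [_ _ _ _ rG].
case=> [l|[e l]]; first by left; apply: rF.
by right; split; [rewrite /= e | apply: rG].
Qed.

Lemma posR_nz r : posR r -> exists h, r h <> 0.
Proof. by case=> h [hp _]; exists h => E; move: hp; rewrite E ltxx. Qed.

Lemma posR_ext r s : (forall h, r h = s h) -> posR r -> posR s.
Proof. by move=> E [h [hp hz]]; exists h; rewrite -E; split=> // h' /hz; rewrite E. Qed.

Lemma posR_not_neg r : posR r -> posR (fun h => - r h) -> False.
Proof.
case=> h1 [p1 z1] [h2 [p2 z2]].
have [e|ne] := eqVneq h1 h2.
  by move: p2; rewrite -e oppr_gt0 ltNge (ltW p1).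
case: (lex_total (elimN eqP ne)) => l.
- by move: p2; rewrite z1 // oppr0 ltxx.
- by move: p1; rewrite -[r h1]opprK z2 // oppr0 ltxx.
Qed.

Lemma posR_add r s : posR r -> posR s -> posR (fun h => r h + s h).
Proof.
case=> h1 [p1 z1] [h2 [p2 z2]].
have [e|ne] := eqVneq h1 h2.
  exists h1; split; first by rewrite addr_gt0 // e.
  by move=> h' l; rewrite z1 // z2 -?e // addr0.
case: (lex_total (elimN eqP ne)) => l.
- exists h2; split; first by rewrite z1 // add0r.
  by move=> h' l'; rewrite z2 // z1 ?addr0 //; apply: lex_trans l l'.
- exists h1; split; first by rewrite z2 // addr0.
  by move=> h' l'; rewrite z1 // z2 ?addr0 //; apply: lex_trans l l'.
Qed.

Lemma posR_comp r (tau : fg -> fg) :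
  (forall h h', lex h h' -> lex (tau h) (tau h')) -> (forall h, exists h', tau h' = h) ->
  posR r -> posR (fun h => r (tau h)).
Proof.
move=> mono surj [h0 [p0 z0]]; have [h1 e1'] := surj h0.
exists h1; rewrite e1'; split=> // h' /mono; rewrite e1'; exact: z0.
Qed.

Lemma top_exists (r : fg -> int) (L : seq fg) : (forall h, r h <> 0 -> h \in L) -> (exists h, r h <> 0) ->
  exists h, r h <> 0 /\ forall h', lex h h' -> r h' = 0.
Proof.
move=> supp [h0 nz0].
have : exists2 h, h \in L & r h <> 0 by exists h0 => //; apply: supp.
suff : forall L' : seq fg, (exists2 h, h \in L' & r h <> 0) ->
  exists h, [/\ h \in L', r h <> 0 & forall h', h' \in L' -> lex h h' -> r h' = 0].
  move=> K /K [h [_ nz hz]]; exists h; split=> // h' l.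
  by have [//|/eqP/supp h'L] := eqVneq (r h') 0; apply: hz.
elim=> [[h]//|a L' IH] [h hin nz].
have [ex|nex] := boolP (has (fun h => r h != 0) L').
- have [h1 [h1L nz1 z1]] : exists h, [/\ h \in L', r h <> 0 & forall h', h' \in L' -> lex h h' -> r h' = 0].
    by apply: IH; case/hasP: ex => x xL /eqP; exists x.
  have [za|nza] := eqVneq (r a) 0.
    exists h1; split; [by rewrite in_cons h1L orbT | by [] | move=> h'; rewrite in_cons].
    case/orP=> [/eqP -> _ //|]; exact: z1.
  have [l|nl] := classic (lex h1 a).
    exists a; split; [by rewrite in_cons eqxx | exact/eqP | move=> h'; rewrite in_cons].
    case/orP=> [/eqP -> /lex_irr//|h'L l']; apply: z1 => //; exact: lex_trans l l'.
  exists h1; split; [by rewrite in_cons h1L orbT | by [] | move=> h'; rewrite in_cons].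
  case/orP=> [/eqP -> //|]; exact: z1.
- have ha : h = a.
    move: hin; rewrite in_cons => /orP[/eqP //|hL].
    by case/negP: nex; apply/hasP; exists h => //; apply/eqP.
  exists a; split; [by rewrite in_cons eqxx | by rewrite -ha | move=> h'; rewrite in_cons].
  case/orP=> [/eqP -> /lex_irr//|h'L _].
  apply/eqP; apply: contraNT nex => nz'; apply/hasP; exists h' => //.
Qed.

Lemma posR_or (r : fg -> int) (L : seq fg) : (forall h, r h <> 0 -> h \in L) -> (exists h, r h <> 0) ->
  posR r \/ posR (fun h => - r h).
Proof.
move=> supp ex; have [h [nz z]] := top_exists supp ex.
case: (ltrgtP (r h) 0) => [lt|gt|e] //.
- by right; exists h; split; [rewrite oppr_gt0 | move=> h' /z ->; rewrite oppr0].
- by left; exists h.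
Qed.

Lemma least_nat (P : nat -> Prop) : (exists n, P n) -> exists n, P n /\ forall m, (m < n)%N -> ~ P m.
Proof.
case=> n Pn; elim: n {-2}n (leqnn n) Pn => [|N IH] n le Pn.
  by exists n; split=> // m; move: le; rewrite leqn0 => /eqP ->.
have [[m [lt Pm]]|nex] := classic (exists m, (m < n)%N /\ P m).
  by apply: (IH m) => //; rewrite -ltnS; apply: leq_trans lt le.
by exists n; split=> // m lt Pm; apply: nex; exists m.
Qed.

Definition mposE (E : nat -> nat -> fg -> int) : Prop :=
  exists n k, [/\ (k < 4)%N,
    (forall m j h, (m < n)%N -> (j < 4)%N -> E j m h = 0),
    (forall j h, (j < k)%N -> E j n h = 0) & posR (E k n)].

Lemma mposE_ext E E' : (forall j n h, E j n h = E' j n h) -> mposE E -> mposE E'.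
Proof.
move=> H [n [k [k4 Z1 Z2 P]]]; exists n, k; split=> //.
- by move=> m j h mn j4; rewrite -H Z1.
- by move=> j h jk; rewrite -H Z2.
- by apply: posR_ext P => h; rewrite H.
Qed.

Lemma mposE_not_neg E : mposE E -> mposE (fun j n h => - E j n h) -> False.
Proof.
move=> [n [k [k4 Z1 Z2 P]]] [n' [k' [k4' Z1' Z2' P']]].
have [ltn|gtn|en] := ltngtP n n'.
- have [h nz] := posR_nz P; apply: nz; apply/eqP; rewrite -oppr_eq0; apply/eqP; exact: Z1'.
- have [h nz] := posR_nz P'; apply: nz; rewrite Z1 ?oppr0 //.
subst n'.
have [ltk|gtk|ek] := ltngtP k k'.
- have [h nz] := posR_nz P; apply: nz; apply/eqP; rewrite -oppr_eq0; apply/eqP; exact: Z2'.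
- have [h nz] := posR_nz P'; apply: nz; rewrite Z2 ?oppr0 //.
subst k'; exact: posR_not_neg P P'.
Qed.

Lemma mposE_add E E' : mposE E -> mposE E' -> mposE (fun j n h => E j n h + E' j n h).
Proof.
move=> [n [k [k4 Z1 Z2 P]]] [n' [k' [k4' Z1' Z2' P']]].
have [ltn|gtn|en] := ltngtP n n'.
- exists n, k; split=> //.
  + by move=> m j h mn j4; rewrite Z1 ?Z1' ?addr0 // (ltn_trans mn ltn).
  + by move=> j h jk; rewrite Z2 ?Z1' ?addr0 // (ltn_trans jk k4).
  + by apply: posR_ext P => h; rewrite (Z1' n) ?addr0.
- exists n', k'; split=> //.
  + by move=> m j h mn j4; rewrite Z1 ?Z1' ?addr0 // (ltn_trans mn gtn).
  + by move=> j h jk; rewrite Z2' ?Z1 ?addr0 // (ltn_trans jk k4').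
  + by apply: posR_ext P' => h; rewrite (Z1 n') ?add0r.
subst n'.
have [ltk|gtk|ek] := ltngtP k k'.
- exists n, k; split=> //.
  + by move=> m j h mn j4; rewrite Z1 ?Z1' ?addr0.
  + by move=> j h jk; rewrite Z2 ?Z2' ?addr0 // (ltn_trans jk ltk).
  + by apply: posR_ext P => h; rewrite (Z2' k) ?addr0.
- exists n, k'; split=> //.
  + by move=> m j h mn j4; rewrite Z1 ?Z1' ?addr0.
  + by move=> j h jk; rewrite Z2 ?Z2' ?addr0 // (ltn_trans jk gtk).
  + by apply: posR_ext P' => h; rewrite (Z2 k') ?add0r.
subst k'; exists n, k; split=> //.
+ by move=> m j h mn j4; rewrite Z1 ?Z1' ?addr0.
+ by move=> j h jk; rewrite Z2 ?Z2' ?addr0.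
+ exact: posR_add.
Qed.

Lemma mposE_or E : (exists j n h, (j < 4)%N /\ E j n h <> 0) ->
  (forall j n, exists L : seq fg, forall h, E j n h <> 0 -> h \in L) ->
  mposE E \/ mposE (fun j n h => - E j n h).
Proof.
move=> ex supp.
have [n [[j [h [j4 nz]]] minn]] := least_nat (P := fun n => exists j h, (j < 4)%N /\ E j n h <> 0)
  (let: ex_intro j (ex_intro n (ex_intro h H)) := ex in ex_intro _ n (ex_intro _ j (ex_intro _ h H))).
have [k [[k4 [h' nz']] mink]] := least_nat (P := fun k => (k < 4)%N /\ exists h, E k n h <> 0)
  (ex_intro _ j (conj j4 (ex_intro _ h nz))).
have Z1 : forall m j h, (m < n)%N -> (j < 4)%N -> E j m h = 0.
  move=> m j0 h0 mn j04; apply: NNPP => nz0; apply: (minn m mn); by exists j0, h0.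
have Z2 : forall j h, (j < k)%N -> E j n h = 0.
  move=> j0 h0 jk; apply: NNPP => nz0; apply: (mink j0 jk); split; last by exists h0.
  exact: ltn_trans jk k4.
have [L suppL] := supp k n.
case: (posR_or suppL (ex_intro _ h' nz')) => P; [left|right]; exists n, k; split=> //.
- by move=> m j0 h0 mn j04; rewrite Z1 ?oppr0.
- by move=> j0 h0 jk; rewrite Z2 ?oppr0.
Qed.

Lemma mposE_transl E E' (tau : nat -> fg -> fg) :
  (forall j h h', lex h h' -> lex (tau j h) (tau j h')) ->
  (forall j h, exists h', tau j h' = h) ->
  (forall n, (forall m j h, (m < n)%N -> (j < 4)%N -> E j m h = 0) ->
     forall m j h, (m <= n)%N -> (j < 4)%N -> E' j m h = E j m (tau j h)) ->
  mposE E -> mposE E'.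
Proof.
move=> mono surj H [n [k [k4 Z1 Z2 P]]]; have K := H n Z1.
exists n, k; split=> //.
- by move=> m j h mn j4; rewrite K ?Z1 // ltnW.
- by move=> j h jk; rewrite K ?Z2 // (ltn_trans jk k4).
- by apply: posR_ext (posR_comp (mono k) (surj k) P) => h; rewrite K.
Qed.

Definition Ecoef offd (M : mat F G) j n h := pcoef (nth [::] (entries offd M) j) n h.

Lemma mposP offd M : mpos ltF ltG offd M <-> mposE (Ecoef offd M).
Proof.
rewrite /mpos /mposE /Ecoef; split.
- move=> [n [k [k4 Z1 Z2 P]]]; exists n, k; split=> // m j h mn j4.
  apply: Z1 => //; rewrite /entries; destruct offd;
    do 4![case: j j4 => [|j] j4; first by simpl; tauto]; by rewrite !ltnS in j4.
- move=> [n [k [k4 Z1 Z2 P]]]; exists n, k; split=> // m e h mn.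
  move: Z1; rewrite /entries; destruct offd; move=> /= Z1 [<-|[<-|[<-|[<-|[]]]]].
  all: first [exact: (Z1 m 0%N) | exact: (Z1 m 1%N) | exact: (Z1 m 2%N) | exact: (Z1 m 3%N)].
Qed.

Lemma Ecoef_sub offd A B j n h :
  Ecoef offd (msub A B) j n h = Ecoef offd A j n h - Ecoef offd B j n h.
Proof.
rewrite /Ecoef /entries; case: offd; do 4?[case: j => [|j]];
  rewrite /= ?pcoef_padd ?pcoef_cat ?pcoef_neg ?nth_nil ?pcoef_nil ?subr0 //.
Qed.

Lemma Ecoef_meq offd A B j n h : meq A B -> Ecoef offd A j n h = Ecoef offd B j n h.
Proof.
by case=> E1 E2 E3 E4; rewrite /Ecoef; case: offd; do 4?[case: j => [|j]] => //=.
Qed.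

Lemma Ecoef_supp offd M : exists L : seq fg, forall j n h, Ecoef offd M j n h <> 0 -> h \in L.
Proof.
exists [seq x.1.2 | x <- m11 M ++ m12 M ++ m21 M ++ m22 M] => j n h /eqP /pcoef_supp.
rewrite !map_cat !mem_cat /entries.
by case: offd; do 4?[case: j => [|j]]; rewrite /= ?nth_nil // => ->; rewrite ?orbT.
Qed.

Lemma mpos_meq offd A B : meq A B -> mpos ltF ltG offd A -> mpos ltF ltG offd B.
Proof.
move=> E /mposP P; apply/mposP; apply: mposE_ext P => j n h; exact: Ecoef_meq.
Qed.

Lemma mzero_belowE offd M n : (forall m j h, (m < n)%N -> (j < 4)%N -> Ecoef offd M j m h = 0) ->
  mzero_below M n.
Proof.
move=> Z m h mn; have := Z m _ h mn; rewrite /Ecoef /entries.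
clear Z; case: offd => Z'; split;
  by first [exact: (Z' 0%N) | exact: (Z' 1%N) | exact: (Z' 2%N) | exact: (Z' 3%N)].
Qed.

Definition rowc (offd : bool) (a b : fg) (j : nat) : fg :=
  match j with 0 => a | 1 => b | 2 => if offd then b else a | _ => if offd then a else b end.
Definition colc (offd : bool) (a b : fg) (j : nat) : fg :=
  match j with 0 => a | 1 => b | 2 => if offd then a else b | _ => if offd then b else a end.

Lemma mpos_mull offd A a b M : goodab A a b -> mpos ltF ltG offd M -> mpos ltF ltG offd (mmul A M).
Proof.
move=> HA /mposP P; apply/mposP.
apply: (mposE_transl (tau := fun j h => pmulFG (pinv (rowc offd a b j)) h)) P.
- by move=> j h h' /(lex_mull (pinv (rowc offd a b j))).
- by move=> j h; exists (pmulFG (rowc offd a b j) h); rewrite pmulVFG.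
move=> n Z m j h mn j4; have := goodab_mul_l HA (mzero_belowE Z) h mn.
rewrite /Ecoef /entries; case=> E1 E2 E3 E4; clear Z.
by case: offd; do 4?[case: j j4 => [|j] j4] => //=.
Qed.

Lemma mpos_mulr offd A a b M : goodab A a b -> mpos ltF ltG offd M -> mpos ltF ltG offd (mmul M A).
Proof.
move=> HA /mposP P; apply/mposP.
apply: (mposE_transl (tau := fun j h => pmulFG h (pinv (colc offd a b j)))) P.
- by move=> j h h' /(lex_mulr (pinv (colc offd a b j))).
- by move=> j h; exists (pmulFG h (colc offd a b j)); rewrite pmulFGK.
move=> n Z m j h mn j4; have := goodab_mul_r HA (mzero_belowE Z) h mn.
rewrite /Ecoef /entries; case=> E1 E2 E3 E4; clear Z.
by case: offd; do 4?[case: j j4 => [|j] j4] => //=.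
Qed.

Lemma pcoef_supp' (p : pol) n : forall h, pcoef p n h <> 0 -> h \in [seq x.1.2 | x <- p].
Proof. by move=> h /eqP; exact: pcoef_supp. Qed.

Lemma nzdiff (r : fg -> int) (L : seq fg) c : (forall h, r h <> 0 -> h \in L) ->
  (exists h, r h <> 0) -> c <> e1 F G -> exists h, r (pmulFG (pinv c) h) - r h <> 0.
Proof.
move=> supp ex ne; have [h0 [nz0 z0]] := top_exists supp ex.
case: (lex_total ne) => l.
- exists h0.
  have l' : lex h0 (pmulFG (pinv c) h0).
    have l1 : lex (e1 F G) (pinv c) by have := lex_mull (pinv c) l; rewrite pmulVa pmulFG1.
    by have := lex_mulr h0 l1; rewrite pmul1FG.
  by rewrite z0 // sub0r => /eqP; rewrite oppr_eq0 => /eqP.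
- exists (pmulFG c h0); rewrite pmulVFG.
  have l' : lex h0 (pmulFG c h0) by have := lex_mulr h0 l; rewrite pmul1FG.
  by rewrite (z0 _ l') subr0.
Qed.

Lemma deg_bound w m h : (size w < m)%N ->
  [/\ pcoef (m11 (rhow w)) m h = 0, pcoef (m12 (rhow w)) m h = 0,
      pcoef (m21 (rhow w)) m h = 0 & pcoef (m22 (rhow w)) m h = 0].
Proof.
elim: w m h => [|a w IH] m h /=.
  case: m => // m _; rewrite /mid /= ?pcoef_cons ?pcoef_nil /=.
  by split; rewrite ?andbF ?addr0.
move=> lt; rewrite -/(rhow w).
have lt' : (size w < m - 1)%N by rewrite ltn_subRL add1n.
have m1 : (1 <= m)%N by case: (m) lt.
case: a => [f|g].
- have [E1 E2 E3 E4] := LF_entries f (rhow w) m h.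
  have [Z1 Z2 Z3 Z4] := IH (m - 1)%N h lt'.
  have [Z1' Z2' Z3' Z4'] := IH (m - 1)%N (pmulFG (pinv (f, 1%g)) h) lt'.
  have [Y1 Y2 Y3 Y4] := IH m (pmulFG (pinv (f, 1%g)) h) (ltn_trans (ltnSn _) lt).
  have [X1 X2 X3 X4] := IH m h (ltn_trans (ltnSn _) lt).
  by rewrite E1 E2 E3 E4 m1 /= Z3 Z4 Z3' Z4' Y1 Y2 X3 X4 !subr0 ?addr0 ?add0r.
- have [E1 E2 E3 E4] := LG_entries g (rhow w) m h.
  have [Z1 Z2 Z3 Z4] := IH (m - 1)%N h lt'.
  have [Z1' Z2' Z3' Z4'] := IH (m - 1)%N (pmulFG (pinv (1%g, g)) h) lt'.
  have [Y1 Y2 Y3 Y4] := IH m (pmulFG (pinv (1%g, g)) h) (ltn_trans (ltnSn _) lt).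
  have [X1 X2 X3 X4] := IH m h (ltn_trans (ltnSn _) lt).
  by rewrite E1 E2 E3 E4 m1 /= Z1 Z2 Z1' Z2' Y3 Y4 X1 X2 !subr0 ?addr0 ?add0r.
Qed.

Definition row1nz (M : mat F G) n := exists h, pcoef (m11 M) n h <> 0 \/ pcoef (m12 M) n h <> 0.
Definition row2nz (M : mat F G) n := exists h, pcoef (m21 M) n h <> 0 \/ pcoef (m22 M) n h <> 0.
Definition row1z (M : mat F G) n := forall h, pcoef (m11 M) n h = 0 /\ pcoef (m12 M) n h = 0.
Definition row2z (M : mat F G) n := forall h, pcoef (m21 M) n h = 0 /\ pcoef (m22 M) n h = 0.

Definition top_ok (w : seq (letter F G)) :=
  match w with
  | [::] => True
  | inl _ :: _ => row2z (rhow w) (size w) /\ row1nz (rhow w) (size w)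
  | inr _ :: _ => row1z (rhow w) (size w) /\ row2nz (rhow w) (size w)
  end.

Lemma mid_e1 : pcoef (m11 (mid F G)) 0 (e1 F G) = 1 /\ pcoef (m22 (mid F G)) 0 (e1 F G) = 1.
Proof. by rewrite /mid /= !pcoef_cons !pcoef_nil eqxx /= addr0. Qed.

Lemma top_okP w : reduced w -> top_ok w.
Proof.
elim: w => [//|a w IH]; rewrite reduced_cons => /andP[/andP[nta rw] sd].
have {}IH := IH rw.
have R2 : (if a is inl _ then true else false) -> row2nz (rhow w) (size w).
  clear rw; case: w sd IH => [|[f'|g'] w'] /=; first by move=> _ _ _; exists (e1 F G); right; rewrite (proj2 mid_e1).
  - by case: a nta.
  - by move=> _ [].
have R1 : (if a is inr _ then true else false) -> row1nz (rhow w) (size w).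
  clear rw R2; case: w sd IH => [|[f'|g'] w'] /=; first by move=> _ _ _; exists (e1 F G); left; rewrite (proj1 mid_e1).
  - by move=> _ [].
  - by case: a nta.
set n := size w; set M := rhow w.
clear sd; case: a nta R1 R2 => [f|g] /= nt R1 R2.
  have cne : (f, 1%g) <> e1 F G by case=> E; move: nt; rewrite E eqxx.
  split.
  3: have cne : (1%g, g) <> e1 F G by case=> E; move: nt; rewrite E eqxx.
  3: split.
- move=> h; have [_ _ -> ->] := LF_entries f M n.+1 h.
  by have [_ _ -> ->] := deg_bound h (ltnSn n).
- have [h [nz|nz]] := R2 isT.
  + have [h' d] := nzdiff (@pcoef_supp' (m21 M) n) (ex_intro _ h nz)
        (c := (f, 1%g)) cne.
    exists h'; left; have [-> _ _ _] := LF_entries f M n.+1 h'.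
    by have [-> _ _ _] := deg_bound (pmulFG (pinv (f, 1%g)) h') (ltnSn n); rewrite add0r /= subn1.
  + have [h' d] := nzdiff (@pcoef_supp' (m22 M) n) (ex_intro _ h nz)
        (c := (f, 1%g)) cne.
    exists h'; right; have [_ -> _ _] := LF_entries f M n.+1 h'.
    by have [_ -> _ _] := deg_bound (pmulFG (pinv (f, 1%g)) h') (ltnSn n); rewrite add0r /= subn1.
- move=> h; have [-> -> _ _] := LG_entries g M n.+1 h.
  by have [-> -> _ _] := deg_bound h (ltnSn n).
- have [h [nz|nz]] := R1 isT.
  + have [h' d] := nzdiff (@pcoef_supp' (m11 M) n) (ex_intro _ h nz)
        (c := (1%g, g)) cne.
    exists h'; left; have [_ _ -> _] := LG_entries g M n.+1 h'.
    by have [_ _ -> _] := deg_bound (pmulFG (pinv (1%g, g)) h') (ltnSn n); rewrite addr0 /= subn1.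
  + have [h' d] := nzdiff (@pcoef_supp' (m12 M) n) (ex_intro _ h nz)
        (c := (1%g, g)) cne.
    exists h'; right; have [_ _ _ ->] := LG_entries g M n.+1 h'.
    by have [_ _ _ ->] := deg_bound (pmulFG (pinv (1%g, g)) h') (ltnSn n); rewrite addr0 /= subn1.
Qed.

Lemma anynz w : reduced w -> exists h,
  [\/ pcoef (m11 (rhow w)) (size w) h <> 0, pcoef (m12 (rhow w)) (size w) h <> 0,
      pcoef (m21 (rhow w)) (size w) h <> 0 | pcoef (m22 (rhow w)) (size w) h <> 0].
Proof.
move/top_okP; case: w => [_|[f|g] w] /=.
- by exists (e1 F G); constructor 1; rewrite (proj1 mid_e1).
- by case=> _ [h [nz|nz]]; exists h; [constructor 1|constructor 2].
- by case=> _ [h [nz|nz]]; exists h; [constructor 3|constructor 4].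
Qed.

Lemma size_le x y : reduced y -> meq (rhow x) (rhow y) -> (size y <= size x)%N.
Proof.
move=> ry [E1 E2 E3 E4]; rewrite leqNgt; apply/negP => lt.
have [h nz] := anynz ry; have [Z1 Z2 Z3 Z4] := deg_bound h lt.
by case: nz; rewrite -?E1 -?E2 -?E3 -?E4.
Qed.

Lemma rhow_inj x y : reduced x -> reduced y -> meq (rhow x) (rhow y) -> x = y.
Proof.
elim: x y => [|a x IH] [|b y] rx ry E.
- by [].
- by have := size_le ry E.
- by have := size_le rx (meq_sym E).
have sz : size x = size y.
  apply/eqP; rewrite eqn_leq; apply/andP; split.
  - exact: (size_le rx (meq_sym E)).
  - exact: (size_le ry E).
have tx := top_okP rx; have ty := top_okP ry.
have ry0 := ry.
move: rx ry; rewrite !reduced_cons => /andP[/andP[na rx] _] /andP[/andP[nb ry] _].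
case: a b na nb tx ty E ry0 => [f|g] [f'|g'] na nb tx ty E ry0; move: na nb => /= na nb.
- have Ep := meq_trans (rhow_push (inl f^-1%g) (inl f :: x))
    (meq_trans (mmul_congr (meq_refl _) E)
       (meq_sym (rhow_push (inl f^-1%g) (inl f' :: y)))).
  have Px : push (inl f^-1%g) (inl f :: x) = x by rewrite /= invg_eq1 (negbTE na) mulVg eqxx.
  have Py : push (inl f^-1%g) (inl f' :: y) =
    if (f^-1 * f' == 1)%g then y else inl (f^-1 * f')%g :: y by rewrite /= invg_eq1 (negbTE na).
  have ry2 := push_reduced (inl f^-1%g) ry0.
  rewrite Px Py in Ep; rewrite Py in ry2; move: Ep ry2.
  case: eqP => [e|ne] Ep ry2.
  + rewrite (IH y rx ry Ep); congr (_ :: _); congr inl.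
    by rewrite -(mulg1_eq e) invgK.
  + have ex := IH _ rx ry2 Ep; rewrite ex /= in sz.
    by move: (ltnSn (size y)); rewrite -{1}sz ltnn.
- case: tx => _ [h nz]; case: ty => Z _; case: (Z h) => Z1 Z2.
  have sz' : size (inl f :: x) = size (inr g' :: y) by rewrite /= sz.
  case: E => E1 E2 _ _.
  by exfalso; case: nz => nz; apply: nz; rewrite ?E1 ?E2 sz' ?Z1 ?Z2.
- case: ty => _ [h nz]; case: tx => Z _; case: (Z h) => Z1 Z2.
  have sz' : size (inr g :: x) = size (inl f' :: y) by rewrite /= sz.
  case: E => E1 E2 _ _.
  by exfalso; case: nz => nz; apply: nz; rewrite -?E1 -?E2 -sz' ?Z1 ?Z2.
- have Ep := meq_trans (rhow_push (inr g^-1%g) (inr g :: x))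
    (meq_trans (mmul_congr (meq_refl _) E)
       (meq_sym (rhow_push (inr g^-1%g) (inr g' :: y)))).
  have Px : push (inr g^-1%g) (inr g :: x) = x by rewrite /= invg_eq1 (negbTE na) mulVg eqxx.
  have Py : push (inr g^-1%g) (inr g' :: y) =
    if (g^-1 * g' == 1)%g then y else inr (g^-1 * g')%g :: y by rewrite /= invg_eq1 (negbTE na).
  have ry2 := push_reduced (inr g^-1%g) ry0.
  rewrite Px Py in Ep; rewrite Py in ry2; move: Ep ry2.
  case: eqP => [e|ne] Ep ry2.
  + rewrite (IH y rx ry Ep); congr (_ :: _); congr inr.
    by rewrite -(mulg1_eq e) invgK.
  + have ex := IH _ rx ry2 Ep; rewrite ex /= in sz.
    by move: (ltnSn (size y)); rewrite -{1}sz ltnn.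
Qed.

Lemma mposE_zero E : (forall j n h, E j n h = 0) -> ~ mposE E.
Proof. by move=> Z [n [k [_ _ _ [h [p _]]]]]; move: p; rewrite Z ltxx. Qed.

Lemma Ecoef_meq_conv offd A B : (forall j n h, (j < 4)%N -> Ecoef offd A j n h = Ecoef offd B j n h) ->
  meq A B.
Proof.
move=> H; rewrite /Ecoef /entries in H.
by case: offd H => H; split=> n h;
  first [exact: (H 0%N n h) | exact: (H 1%N n h) | exact: (H 2%N n h) | exact: (H 3%N n h)].
Qed.

Lemma frak_ordering offd : is_ordering (@fp_mul F G) (frak ltF ltG offd).
Proof.
rewrite /frak; split.
- move=> x /mposP; apply: mposE_zero => j n h; by rewrite Ecoef_sub subrr.
- move=> x y z /mposP P1 /mposP P2; apply/mposP.
  apply: mposE_ext (mposE_add P2 P1) => j n h; rewrite !Ecoef_sub; ring.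
- move=> x y nxy.
  have ex : exists j n h, (j < 4)%N /\ Ecoef offd (msub (rho y) (rho x)) j n h <> 0.
    apply: NNPP => nex; apply: nxy; apply/esym/val_inj.
    apply: rhow_inj; [exact: (proj2_sig y) | exact: (proj2_sig x) |].
    apply: (@Ecoef_meq_conv offd) => j n h j4; apply/eqP; rewrite -subr_eq0; apply/eqP.
    rewrite -Ecoef_sub; apply: NNPP => nz; apply: nex; by exists j, n, h.
  have supp : forall j n, exists L : seq fg, forall h, Ecoef offd (msub (rho y) (rho x)) j n h <> 0 -> h \in L.
    by move=> j n; have [L HL] := Ecoef_supp offd (msub (rho y) (rho x)); exists L => h; apply: HL.
  case: (mposE_or ex supp) => P; [left|right]; apply/mposP => //.
  by apply: mposE_ext P => j n h; rewrite !Ecoef_sub opprB.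
- move=> x y z P; have [a [b Hg]] := good_rhow (proj1_sig z).
  have := mpos_mull Hg P; apply: mpos_meq.
  apply: meq_trans (mmul_subr _ _ _) _; apply: meq_sym.
  by apply: msub_congr; apply: rho_mul.
- move=> x y z P; have [a [b Hg]] := good_rhow (proj1_sig z).
  have := mpos_mulr Hg P; apply: mpos_meq.
  apply: meq_trans (mmul_subl _ _ _) _; apply: meq_sym.
  by apply: msub_congr; apply: rho_mul.
Qed.

Lemma posR_delta c : c <> e1 F G ->
  posR (fun h => (if h == c then 1 else 0) - (if h == e1 F G then 1 else 0)) <-> lex (e1 F G) c.
Proof.
move=> ne; split.
- case=> h0 [p0 z0].
  have h0c : h0 = c.
    apply/eqP; apply: contraTT p0 => nh; rewrite (negbTE nh) sub0r oppr_gt0.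
    by case: ifP.
  subst h0; case: (lex_total ne) => // l.
  by move: (z0 _ l); rewrite eqxx; case: eqP => // /esym.
- move=> l; exists c; rewrite eqxx; case: eqP => [//|_]; split=> // h' l'.
  case: eqP => [E|_]; first by move: l'; rewrite E => /lex_irr.
  case: eqP => [E|_] //; move: l'; rewrite E => l'.
  by case: (lex_irr (lex_trans l l')).
Qed.

Lemma eq_shift (c h : fg) : (pmulFG (pinv c) h == e1 F G) = (h == c).
Proof.
apply/eqP/eqP => [E|->]; last by rewrite pmulVa.
by rewrite -(pmulFGV c h) E pmulFG1.
Qed.

Lemma reducedF (f : F) : f != 1%g -> reduced [:: @inl F G f].
Proof. by move=> nf; rewrite /reduced /= nf. Qed.
Lemma reducedG (g : G) : g != 1%g -> reduced [:: @inr F G g].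
Proof. by move=> ng; rewrite /reduced /= ng. Qed.

Definition wordF (f : F) (nf : f != 1%g) : freeprod F G := exist _ [:: inl f] (reducedF nf).
Definition wordG (g : G) (ng : g != 1%g) : freeprod F G := exist _ [:: inr g] (reducedG ng).

Lemma Ecoef0 offd M n h : Ecoef offd M 0 n h = pcoef (m11 M) n h.
Proof. by case: offd. Qed.
Lemma Ecoef1 offd M n h : Ecoef offd M 1 n h = pcoef (m22 M) n h.
Proof. by case: offd. Qed.

Lemma mid11 h : pcoef (m11 (mid F G)) 0 h = if h == e1 F G then 1 else 0.
Proof. by rewrite /mid /= pcoef_cons pcoef_nil /= andbT addr0 eq_sym. Qed.
Lemma mid22 h : pcoef (m22 (mid F G)) 0 h = if h == e1 F G then 1 else 0.
Proof. by rewrite /mid /= pcoef_cons pcoef_nil /= andbT addr0 eq_sym. Qed.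

Lemma E_wordF offd f (nf : f != 1%g) h :
  Ecoef offd (msub (rho (wordF nf)) (rho (fp_one F G))) 0 0 h =
  (if h == (f, 1%g) then 1 else 0) - (if h == e1 F G then 1 else 0).
Proof.
rewrite Ecoef_sub !Ecoef0.
change (rho (wordF nf)) with (mmul (L (inl f)) (mid F G)).
change (rho (fp_one F G)) with (mid F G).
have [-> _ _ _] := LF_entries f (mid F G) 0 h.
by rewrite /= addr0 !mid11 eq_shift.
Qed.

Lemma E_wordG offd g (ng : g != 1%g) h :
  Ecoef offd (msub (rho (wordG ng)) (rho (fp_one F G))) 0 0 h = 0 /\
  Ecoef offd (msub (rho (wordG ng)) (rho (fp_one F G))) 1 0 h =
  (if h == (1%g, g) then 1 else 0) - (if h == e1 F G then 1 else 0).
Proof.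
rewrite !Ecoef_sub Ecoef0 Ecoef1 Ecoef0 Ecoef1.
change (rho (wordG ng)) with (mmul (L (inr g)) (mid F G)).
change (rho (fp_one F G)) with (mid F G).
have [-> _ _ ->] := LG_entries g (mid F G) 0 h.
by rewrite /= add0r subrr !mid22 eq_shift.
Qed.

Lemma frakF offd f (nf : f != 1%g) : frak ltF ltG offd (fp_one F G) (wordF nf) <-> ltF 1%g f.
Proof.
have cne : (f, 1%g) <> e1 F G by case=> E; move: nf; rewrite E eqxx.
have val1 : Ecoef offd (msub (rho (wordF nf)) (rho (fp_one F G))) 0 0 (f, 1%g) = 1.
  by rewrite E_wordF eqxx; case: eqP => // _; rewrite subr0.
have lexE : lex (e1 F G) (f, 1%g) <-> ltF 1%g f.
  case: HG => irrG _ _ _ _.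
  by split; [case=> // [[_ /irrG]] | move=> l; left].
rewrite /frak mposP; split.
- move=> [n [k [k4 Z1 Z2 P]]].
  case: n Z1 Z2 P => [|n] Z1 Z2 P; last by move: (Z1 0%N 0%N (f, 1%g) isT isT); rewrite val1.
  case: k k4 Z1 Z2 P => [|k] k4 Z1 Z2 P; last by move: (Z2 0%N (f, 1%g) isT); rewrite val1.
  apply/lexE/(posR_delta cne); apply: posR_ext P => h; exact: E_wordF.
- move/lexE/(posR_delta cne) => P; exists 0%N, 0%N; split=> //.
  by apply: posR_ext P => h; rewrite E_wordF.
Qed.

Lemma frakG offd g (ng : g != 1%g) : frak ltF ltG offd (fp_one F G) (wordG ng) <-> ltG 1%g g.
Proof.
have cne : (1%g, g) <> e1 F G by case=> E; move: ng; rewrite E eqxx.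
have val1 : Ecoef offd (msub (rho (wordG ng)) (rho (fp_one F G))) 1 0 (1%g, g) = 1.
  by rewrite (proj2 (E_wordG _ _ _)) eqxx; case: eqP => // _; rewrite subr0.
have lexE : lex (e1 F G) (1%g, g) <-> ltG 1%g g.
  case: HF => irrF _ _ _ _.
  by split; [case=> [/irrF //|[_ //]] | move=> l; right].
rewrite /frak mposP; split.
- move=> [n [k [k4 Z1 Z2 P]]].
  case: n Z1 Z2 P => [|n] Z1 Z2 P; last by move: (Z1 0%N 1%N (1%g, g) isT isT); rewrite val1.
  case: k k4 Z1 Z2 P => [|[|k]] k4 Z1 Z2 P.
  + have [h [p _]] := P; move: p; rewrite (proj1 (E_wordG _ _ _)) ltxx //.
  + apply/lexE/(posR_delta cne); apply: posR_ext P => h; exact: (proj2 (E_wordG _ _ _)).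
  + by move: (Z2 1%N (1%g, g) isT); rewrite val1.
- move/lexE/(posR_delta cne) => P; exists 0%N, 1%N; split=> //.
  + by move=> [|j] h // _; rewrite (proj1 (E_wordG _ _ _)).
  + by apply: posR_ext P => h; rewrite (proj2 (E_wordG _ _ _)).
Qed.

End Ord.

End Alg.

From Stdlib Require Import FunctionalExtensionality PropExtensionality ProofIrrelevance.

Section Final.
Variables F G : groupType.

Definition suppM (M : mat F G) : seq (F * G) :=
  [seq x.1.2 | x <- m11 M ++ m12 M ++ m21 M ++ m22 M].

Lemma Ecoef_suppM offd M j n h : Ecoef offd M j n h <> 0 -> h \in suppM M.
Proof.
move/eqP/pcoef_supp; rewrite /suppM !map_cat !mem_cat /entries.
by case: offd; do 4?[case: j => [|j]]; rewrite /= ?nth_nil // => ->; rewrite ?orbT.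
Qed.

Lemma posR_transfer (ltF ltF' : F -> F -> Prop) (ltG ltG' : G -> G -> Prop)
  (HF : is_ordering (fun x y : F => (x * y)%g) ltF)
  (HG : is_ordering (fun x y : G => (x * y)%g) ltG)
  (HF' : is_ordering (fun x y : F => (x * y)%g) ltF')
  (HG' : is_ordering (fun x y : G => (x * y)%g) ltG')
  (r : F * G -> int) (L : seq (F * G)) :
  (forall h, r h <> 0 -> h \in L) ->
  (forall a b, a \in [seq x.1 | x <- L] -> b \in [seq x.1 | x <- L] -> ltF a b -> ltF' a b) ->
  (forall a b, a \in [seq x.2 | x <- L] -> b \in [seq x.2 | x <- L] -> ltG a b -> ltG' a b) ->
  posR ltF ltG r -> posR ltF' ltG' r.
Proof.
move=> supp TF TG [h0 [p0 z0]]; exists h0; split=> // h' l'.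
apply: NNPP => nz; have h'L := supp h' nz.
have h0L : h0 \in L by apply: supp => E; move: p0; rewrite E ltxx.
have [e|ne] := eqVneq h0 h'.
  by subst; exact: (lex_irr HF' HG' l').
case: (lex_total HF HG (elimN eqP ne)) => l; first by apply: nz; exact: z0.
have l2 : lexlt ltF' ltG' h' h0.
  case: l => [lt|[e lt]]; [left | right; split=> //].
  - by apply: TF => //; apply: map_f.
  - by apply: TG => //; apply: map_f.
exact: (lex_irr HF' HG' (lex_trans HF' HG' l' l2)).
Qed.

Lemma mposE_transfer (ltF ltF' : F -> F -> Prop) (ltG ltG' : G -> G -> Prop)
  (HF : is_ordering (fun x y : F => (x * y)%g) ltF)
  (HG : is_ordering (fun x y : G => (x * y)%g) ltG)
  (HF' : is_ordering (fun x y : F => (x * y)%g) ltF')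
  (HG' : is_ordering (fun x y : G => (x * y)%g) ltG')
  E (L : seq (F * G)) :
  (forall j n h, E j n h <> 0 -> h \in L) ->
  (forall a b, a \in [seq x.1 | x <- L] -> b \in [seq x.1 | x <- L] -> ltF a b -> ltF' a b) ->
  (forall a b, a \in [seq x.2 | x <- L] -> b \in [seq x.2 | x <- L] -> ltG a b -> ltG' a b) ->
  mposE ltF ltG E -> mposE ltF' ltG' E.
Proof.
move=> supp TF TG [n [k [k4 Z1 Z2 P]]]; exists n, k; split=> //.
exact: (posR_transfer HF HG HF' HG' (supp k n) TF TG P).
Qed.

End Final.

Lemma sep (T : groupType) (o : ordering (fun x y : T => (x * y)%g)) (P : seq (T * T)) :
  exists S : seq T, basic_open 1%g S o /\
    forall o' : ordering (fun x y : T => (x * y)%g), basic_open 1%g S o' ->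
      forall a b, (a, b) \in P -> proj1_sig o a b -> proj1_sig o' a b.
Proof.
case: o => lt [irr tr to li ri]; rewrite /basic_open /=.
elim: P => [|[a b] P [S [HS HS']]].
  by exists [::]; split=> // o' _ a b.
have [l|nl] := classic (lt a b).
- exists ((a^-1 * b)%g :: S); split.
    move=> s [<-|/HS //]; have := li _ _ (a^-1)%g l; by rewrite mulVg.
  move=> [lt' H'] /= B a0 b0; have [_ _ _ li' _] := H'.
  rewrite in_cons => /orP[/eqP [-> ->] _|H].
    have := li' _ _ a (B _ (or_introl erefl)); by rewrite mulg1 mulVKg.
  by apply: (HS' (exist _ lt' H')) => // s Hs; apply: B; right.
- exists S; split=> // o' B a0 b0; rewrite in_cons => /orP[/eqP [-> ->] //|H].
  exact: HS'.
Qed.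

Lemma In_flatten (A : Type) (B : eqType) (f : A -> seq B) (S : seq A) s :
  List.In s S -> {subset f s <= flatten [seq f x | x <- S]}.
Proof.
elim: S => [//|x S IH] /= [->|/IH H] y Hy; rewrite mem_cat ?Hy //.
by rewrite H ?orbT.
Qed.

Lemma ord_eq (T : groupType) (o o' : ordering (fun x y : T => (x * y)%g)) :
  (forall t, t != 1%g -> (proj1_sig o 1%g t <-> proj1_sig o' 1%g t)) -> o = o'.
Proof.
case: o o' => lt H [lt' H'] /= E.
have shift : forall (l : T -> T -> Prop), is_ordering (fun x y : T => (x * y)%g) l ->
  forall a b, l a b <-> l 1%g (a^-1 * b)%g.
  move=> l [_ _ _ li _] a b; split=> [/(li _ _ (a^-1)%g)|/(li _ _ a)]; by rewrite ?mulVg ?mulg1 ?mulVKg.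
have el : lt = lt'.
  apply: functional_extensionality => a; apply: functional_extensionality => b.
  apply: propositional_extensionality; rewrite (shift _ H) (shift _ H').
  have [e|ne] := eqVneq (a^-1 * b)%g 1%g; last exact: E.
  case: H H' => irr _ _ _ _ [irr' _ _ _ _]; by rewrite e; split=> [/irr|/irr'].
subst lt'; congr exist; exact: proof_irrelevance.
Qed.


Unset Implicit Arguments.
Close Scope ring_scope.

Theorem theorem7p2 (F G : groupType) (offd : bool) :
  exists Phi : ordering (fun x y : F => (x * y)%g) *
               ordering (fun x y : G => (x * y)%g) ->
               ordering (@fp_mul F G),
    (forall p : ordering (fun x y : F => (x * y)%g) *
                ordering (fun x y : G => (x * y)%g),
        proj1_sig (Phi p) = frak (proj1_sig p.1) (proj1_sig p.2) offd) /\
    ord_continuous 1%g 1%g (@fp_one F G) Phi /\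
    injective Phi.
Proof.
pose Phi := fun p : ordering (fun x y : F => (x * y)%g) * ordering (fun x y : G => (x * y)%g) =>
  exist (is_ordering (@fp_mul F G)) (frak (proj1_sig p.1) (proj1_sig p.2) offd)
    (frak_ordering (proj2_sig p.1) (proj2_sig p.2) offd).
exists Phi; split; first by []. split.
- move=> U HU [o1 o2] Up.
  have [S [HS HSU]] := HU _ Up.
  pose Lall := flatten [seq suppM (msub (rho s) (rho (fp_one F G))) | s <- S].
  have [S1 [B1 T1]] := sep o1 [seq (x.1, y.1) | x <- Lall, y <- Lall].
  have [S2 [B2 T2]] := sep o2 [seq (x.2, y.2) | x <- Lall, y <- Lall].
  exists S1, S2; split; first by []. split; first by [].
  move=> [q1 q2] /= Bq1 Bq2; apply: HSU => s Ins.
  have := HS s Ins; rewrite /= /frak !mposP.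
  apply: (mposE_transfer (proj2_sig o1) (proj2_sig o2) (proj2_sig q1) (proj2_sig q2)
    (L := Lall)).
  + move=> j n h /Ecoef_suppM; exact: (In_flatten (f := fun s => suppM (msub (rho s) (rho (fp_one F G)))) Ins).
  + move=> a b /mapP[x xL ->] /mapP[y yL ->]; apply: T1 Bq1 _ _ _.
    exact: (allpairs_f (fun x y : F * G => (x.1, y.1)) xL yL).
  + move=> a b /mapP[x xL ->] /mapP[y yL ->]; apply: T2 Bq2 _ _ _.
    exact: (allpairs_f (fun x y : F * G => (x.2, y.2)) xL yL).
- move=> [p1 p2] [p1' p2'] E.
  have Efr := congr1 (@proj1_sig _ _) E; rewrite /= in Efr.
  congr pair; apply: ord_eq => t nt.
  + rewrite -(frakF (proj2_sig p1) (proj2_sig p2) offd nt) -(frakF (proj2_sig p1') (proj2_sig p2') offd nt).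
    by rewrite Efr.
  + rewrite -(frakG (proj2_sig p1) (proj2_sig p2) offd nt) -(frakG (proj2_sig p1') (proj2_sig p2') offd nt).
    by rewrite Efr.
Qed.
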